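(* Let $E_2$ be a para-Hilbert space and let $E_1=(X_{E_1},H_{E_1},Y_{E_1})$ be a split subspace of $E_2$. Then $i_{E_2}(X_{E_1})$ is dense in $H_{E_1}$ and $j_{E_2}(H_{E_1})$ is dense in $Y_{E_1}$.
   Context: A para-Hilbert space $E$ consists of Banach spaces $X_E,Y_E$, a Hilbert space $H_E$ with inner product and Riesz isomorphism $I_E\colon H_E\to H_E'$, bounded linear injections with dense image $i_E\colon X_E\to H_E$, $j_E\colon H_E\to Y_E$, and an isomorphism of Banach spaces $J_E\colon X_E\to Y_E'$ with $j_E'\circ J_E=I_E\circ i_E$ ($'$ denotes duals and dual operators). A morphism $P\colon E\to E$ is a triple of bounded linear operators $X_P,H_P,Y_P$ on $X_E,H_E,Y_E$ with $i_EX_P=H_Pi_E$, $j_EH_P=Y_Pj_E$. A triple $E_1=(X_{E_1},H_{E_1},Y_{E_1})$ of split (complemented) closed subspaces $X_{E_1}\subset X_{E_2}$, $H_{E_1}\subset H_{E_2}$, $Y_{E_1}\subset Y_{E_2}$ with $i_{E_2}(X_{E_1})\subset H_{E_1}$ and $j_{E_2}(H_{E_1})\subset Y_{E_1}$ is a split subspace of $E_2$ if there is a morphism $P\colon E_2\to E_2$ with $PP=P$ and $X_P(X_{E_2})=X_{E_1}$, $H_P(H_{E_2})=H_{E_1}$, $Y_P(Y_{E_2})=Y_{E_1}$. *)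

(* Defs.v *)
From HB Require Import structures.
From mathcomp Require Import all_boot all_order all_algebra.
From mathcomp Require Import all_classical all_reals all_analysis.
Set Implicit Arguments. Unset Strict Implicit. Unset Printing Implicit Defensive.
Import Order.TTheory GRing.Theory Num.Theory.
Import numFieldNormedType.Exports.
Local Open Scope classical_set_scope.
Local Open Scope ring_scope.

Definition is_linear (R : realType) (U V : normedModType R) (f : U -> V) : Prop :=
  forall (a : R) (u v : U), f (a *: u + v) = a *: f u + f v.

Definition bounded_linear (R : realType) (U V : normedModType R) (f : U -> V) : Prop :=
  is_linear f /\ continuous f.

Definition lin_subspace (R : realType) (U : normedModType R) (A : set U) : Prop :=
  A 0 /\ forall (a : R) u v, A u -> A v -> A (a *: u + v).

Definition split_closed_subspace (R : realType) (U : normedModType R) (A : set U) : Prop :=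
  lin_subspace A /\ closed A /\
  exists B : set U, lin_subspace B /\ closed B /\ A `&` B = [set 0] /\
    forall u : U, exists a b, A a /\ B b /\ u = a + b.

Definition hilbert_inner (R : realType) (H : completeNormedModType R) (ip : H -> H -> R) : Prop :=
  (forall (a : R) (u v w : H), ip (a *: u + v) w = a * ip u w + ip v w) /\
  (forall u v : H, ip u v = ip v u) /\
  (forall u : H, ip u u = `|u| ^+ 2).

(* Y' : continuous linear functionals on Y. The Riesz map is I h = ip h (.).
   The dual map j' sends f in Y' to f \o j.
   J : X -> Y' is an isomorphism of Banach spaces (Y' with the operator norm):
   J x is a continuous linear functional, J is linear, bijective onto Y',
   bounded, with bounded inverse. *)
Definition para_hilbert (R : realType) (X H Y : completeNormedModType R)
  (ip : H -> H -> R) (i : X -> H) (j : H -> Y) (J : X -> Y -> R) : Prop :=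
  hilbert_inner ip /\
  bounded_linear i /\ injective i /\ dense (range i) /\
  bounded_linear j /\ injective j /\ dense (range j) /\
  (forall x : X, bounded_linear (J x)) /\
  (forall (a : R) (x1 x2 : X) (y : Y), J (a *: x1 + x2) y = a * J x1 y + J x2 y) /\
  injective J /\
  (forall f : Y -> R, bounded_linear f -> exists x : X, J x = f) /\
  (exists C : R, 0 < C /\ forall (x : X) (y : Y), `|J x y| <= C * `|x| * `|y|) /\
  (exists c : R, 0 < c /\ forall (x : X) (M : R),
      (forall y : Y, `|J x y| <= M * `|y|) -> c * `|x| <= M) /\
  (* j' o J = I o i *)
  (forall (x : X) (h : H), J x (j h) = ip (i x) h).

Definition ph_morphism (R : realType) (X H Y : completeNormedModType R)
  (i : X -> H) (j : H -> Y) (XP : X -> X) (HP : H -> H) (YP : Y -> Y) : Prop :=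
  bounded_linear XP /\ bounded_linear HP /\ bounded_linear YP /\
  (forall x, i (XP x) = HP (i x)) /\ (forall h, j (HP h) = YP (j h)).

Definition split_subspace (R : realType) (X H Y : completeNormedModType R)
  (i : X -> H) (j : H -> Y) (X1 : set X) (H1 : set H) (Y1 : set Y) : Prop :=
  split_closed_subspace X1 /\ split_closed_subspace H1 /\ split_closed_subspace Y1 /\
  i @` X1 `<=` H1 /\ j @` H1 `<=` Y1 /\
  exists (XP : X -> X) (HP : H -> H) (YP : Y -> Y),
    ph_morphism i j XP HP YP /\
    (forall x, XP (XP x) = XP x) /\ (forall h, HP (HP h) = HP h) /\
    (forall y, YP (YP y) = YP y) /\
    XP @` setT = X1 /\ HP @` setT = H1 /\ YP @` setT = Y1.

(* Main.v *)
Require Import Defs.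
From HB Require Import structures.
From mathcomp Require Import all_boot all_order all_algebra.
From mathcomp Require Import all_classical all_reals all_analysis.
Import numFieldNormedType.Exports.
Local Open Scope classical_set_scope.
Local Open Scope ring_scope.

Lemma gen_dense (R : realType) (X T : completeNormedModType R) (i : X -> T) (P : T -> T) (Q : X -> X)
  (S : set X) (S1 : set T) :
  dense (range i) -> continuous P -> (forall x, i (Q x) = P (i x)) ->
  (forall h, P (P h) = P h) -> Q @` setT = S -> P @` setT = S1 ->
  S1 `<=` closure (i @` S).
Proof.
move=> di cP iQ PP QS PS1 h; rewrite -PS1 => -[h' _ <-] B nB.
have hh := PP h'.
have nPB : nbhs (P h') (P @^-1` B).
  apply: (cP (P h') B); rewrite hh; exact: nB.
move: nPB.
rewrite nbhsE => -[U [oU Uh] UB].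
have [y [Uy [x _ ix]]] := di U (ex_intro _ _ Uh) oU.
subst y; exists (P (i x)); split.
  by exists (Q x); [rewrite -QS; exists x | rewrite iQ].
exact: UB.
Qed.

Theorem lemma2p7 (R : realType) (X H Y : completeNormedModType R)
  (ip : H -> H -> R) (i : X -> H) (j : H -> Y) (J : X -> Y -> R)
  (X1 : set X) (H1 : set H) (Y1 : set Y) :
  para_hilbert ip i j J ->
  split_subspace i j X1 H1 Y1 ->
  H1 `<=` closure (i @` X1) /\ Y1 `<=` closure (j @` H1).
Proof.
move=> [_ [_ [_ [di [_ [_ [dj _]]]]]]].
move=> [_ [_ [_ [_ [_ [XP [HP [YP [[_ [[_ cH] [[_ cY] [iX jH]]]] [XX [HH [YY [EX [EH EY]]]]]]]]]]]]]].
split.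
  exact: (@gen_dense R X H i HP XP X1 H1 di cH iX HH EX EH).
exact: (@gen_dense R H Y j YP HP H1 Y1 dj cY jH YY EH EY).
Qed.
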